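(* Let $\mathcal{A}$ be a complex Banach algebra with identity, $\lambda$ a nonzero complex number, and $M = \begin{pmatrix} A & B \\ C & D \end{pmatrix} \in M_2(\mathcal{A})$ with $A, D \in \mathcal{A}^d$. Suppose $BC, CB \in \mathcal{A}^d$, and $$AB = \lambda A^\pi B D (CB)^\pi \quad\text{and}\quad DC = \lambda D^\pi C A (BC)^\pi.$$ Put $P = \begin{pmatrix} A & 0 \\ 0 & D \end{pmatrix}$ and $Q = \begin{pmatrix} 0 & B \\ C & 0 \end{pmatrix}$, so $M=P+Q$, $P^d=\begin{pmatrix} A^d & 0 \\ 0 & D^d \end{pmatrix}$, $Q^d=\begin{pmatrix} 0 & B(CB)^d \\ C(BC)^d & 0 \end{pmatrix}$. Then $M \in M_2(\mathcal{A})^d$ and $$\begin{aligned} M^d ={}& \begin{pmatrix} (BC)^\pi A^d & B(CB)^d D^\pi \\ C(BC)^d A^\pi & (CB)^\pi D^d \end{pmatrix} + \sum_{n=0}^{\infty} (Q^d)^{n+2} P M^n P^\pi + Q^\pi \sum_{n=0}^{\infty} M^n Q (P^d)^{n+2} \\ &- \sum_{n=0}^{\infty} \sum_{k=0}^{\infty} (Q^d)^{k+1} P M^{n+k} Q (P^d)^{n+2} - \sum_{n=0}^{\infty} (Q^d)^{n+2} P M^n Q P^d.\end{aligned}$$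
   Context: $M_2(\mathcal{A})$ is the Banach algebra of $2\times 2$ matrices over $\mathcal{A}$. An element $x$ of a Banach algebra has a generalized Drazin (g-Drazin) inverse $x^d$ if $x^d$ commutes with $x$, $x^d = x^dxx^d$ and $x - x^2x^d$ is quasinilpotent (i.e. $\lim\|y^n\|^{1/n}=0$ for $y=x-x^2x^d$); $\mathcal{A}^d$ (resp. $M_2(\mathcal{A})^d$) denotes the set of g-Drazin invertible elements. The spectral idempotent is $x^\pi = 1 - xx^d$. *)

(* Defs.v *)
From Stdlib Require Import Reals.
Open Scope R_scope.

Record cplx := mkC { cRe : R; cIm : R }.
Definition cadd (a b : cplx) := mkC (cRe a + cRe b) (cIm a + cIm b).
Definition cmul (a b : cplx) :=
  mkC (cRe a * cRe b - cIm a * cIm b) (cRe a * cIm b + cIm a * cRe b).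
Definition c0 := mkC 0 0.
Definition c1 := mkC 1 0.
Definition cabs (a : cplx) := sqrt (cRe a ^ 2 + cIm a ^ 2).

Fixpoint powg {T} (mul : T -> T -> T) (one : T) (x : T) (n : nat) : T :=
  match n with O => one | S k => mul (powg mul one x k) x end.

Definition cvg_to {T} (sub : T -> T -> T) (nrm : T -> R) (u : nat -> T) (l : T) :=
  forall eps, 0 < eps -> exists N, forall n, (N <= n)%nat -> nrm (sub (u n) l) < eps.

Definition cauchy {T} (sub : T -> T -> T) (nrm : T -> R) (u : nat -> T) :=
  forall eps, 0 < eps -> exists N, forall m n, (N <= m)%nat -> (N <= n)%nat ->
    nrm (sub (u m) (u n)) < eps.

Fixpoint psum {T} (add : T -> T -> T) (zero : T) (u : nat -> T) (n : nat) : T :=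
  match n with O => zero | S k => add (psum add zero u k) (u k) end.

(* lim_n ||y^n||^(1/n) = 0, written out: for every eps>0, eventually
   ||y^n||^(1/n) <= eps, i.e. ||y^n|| <= eps^n. *)
Definition quasinil {T} (mul : T -> T -> T) (one : T) (nrm : T -> R) (y : T) :=
  forall eps, 0 < eps -> exists N, forall n, (N <= n)%nat ->
    nrm (powg mul one y n) <= eps ^ n.

Definition gdrazin {T} (add mul : T -> T -> T) (opp : T -> T) (one : T)
  (nrm : T -> R) (x xd : T) :=
  mul xd x = mul x xd /\ xd = mul (mul xd x) xd /\
  quasinil mul one nrm (add x (opp (mul (mul x x) xd))).

Record CBanachAlg := {
  car :> Type;
  bzero : car; bone : car;
  badd : car -> car -> car; bopp : car -> car; bmul : car -> car -> car;
  bscal : cplx -> car -> car;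
  bnorm : car -> R;
  baddA : forall x y z, badd x (badd y z) = badd (badd x y) z;
  baddC : forall x y, badd x y = badd y x;
  badd0 : forall x, badd x bzero = x;
  baddN : forall x, badd x (bopp x) = bzero;
  bmulA : forall x y z, bmul x (bmul y z) = bmul (bmul x y) z;
  bmul1l : forall x, bmul bone x = x;
  bmul1r : forall x, bmul x bone = x;
  bmulDl : forall x y z, bmul (badd x y) z = badd (bmul x z) (bmul y z);
  bmulDr : forall x y z, bmul x (badd y z) = badd (bmul x y) (bmul x z);
  bscal1 : forall x, bscal c1 x = x;
  bscalA : forall a b x, bscal a (bscal b x) = bscal (cmul a b) x;
  bscalDl : forall a b x, bscal (cadd a b) x = badd (bscal a x) (bscal b x);
  bscalDr : forall a x y, bscal a (badd x y) = badd (bscal a x) (bscal a y);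
  bscalMl : forall a x y, bscal a (bmul x y) = bmul (bscal a x) y;
  bscalMr : forall a x y, bscal a (bmul x y) = bmul x (bscal a y);
  bnorm_ge0 : forall x, 0 <= bnorm x;
  bnorm_eq0 : forall x, bnorm x = 0 -> x = bzero;
  bnormD : forall x y, bnorm (badd x y) <= bnorm x + bnorm y;
  bnormZ : forall a x, bnorm (bscal a x) = cabs a * bnorm x;
  bnormM : forall x y, bnorm (bmul x y) <= bnorm x * bnorm y;
  bnorm1 : bnorm bone = 1;
  bcomplete : forall u : nat -> car,
    cauchy (fun x y => badd x (bopp y)) bnorm u ->
    exists l, cvg_to (fun x y => badd x (bopp y)) bnorm u l
}.

Arguments bzero {c}. Arguments bone {c}. Arguments badd {c}. Arguments bopp {c}.
Arguments bmul {c}. Arguments bscal {c}. Arguments bnorm {c}.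

Section Alg.
Variable A : CBanachAlg.
Definition bsub (x y : A) := badd x (bopp y).
Definition gd (x xd : A) := gdrazin badd bmul bopp bone bnorm x xd.
Definition spi (x xd : A) : A := bsub bone (bmul x xd).

Record M2 := mkM2 { m11 : A; m12 : A; m21 : A; m22 : A }.
Definition m2add (X Y : M2) :=
  mkM2 (badd (m11 X) (m11 Y)) (badd (m12 X) (m12 Y))
       (badd (m21 X) (m21 Y)) (badd (m22 X) (m22 Y)).
Definition m2opp (X : M2) :=
  mkM2 (bopp (m11 X)) (bopp (m12 X)) (bopp (m21 X)) (bopp (m22 X)).
Definition m2sub (X Y : M2) := m2add X (m2opp Y).
Definition m2mul (X Y : M2) :=
  mkM2 (badd (bmul (m11 X) (m11 Y)) (bmul (m12 X) (m21 Y)))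
       (badd (bmul (m11 X) (m12 Y)) (bmul (m12 X) (m22 Y)))
       (badd (bmul (m21 X) (m11 Y)) (bmul (m22 X) (m21 Y)))
       (badd (bmul (m21 X) (m12 Y)) (bmul (m22 X) (m22 Y))).
Definition m2zero := mkM2 bzero bzero bzero bzero.
Definition m2one := mkM2 bone bzero bzero bone.
(* a Banach-algebra norm on M_2(A) equivalent to any standard one
   (submultiplicative; all such norms give the same topology) *)
Definition m2norm (X : M2) :=
  bnorm (m11 X) + bnorm (m12 X) + bnorm (m21 X) + bnorm (m22 X).
Definition m2pow (X : M2) (n : nat) := powg m2mul m2one X n.

Definition m2gd (X Xd : M2) := gdrazin m2add m2mul m2opp m2one m2norm X Xd.
Definition m2series (u : nat -> M2) (s : M2) :=
  cvg_to m2sub m2norm (psum m2add m2zero u) s.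
End Alg.

Arguments mkM2 {A}. Arguments m2add {A}. Arguments m2sub {A}. Arguments m2mul {A}.
Arguments m2one {A}. Arguments m2pow {A}. Arguments m2gd {A}. Arguments m2series {A}.
Arguments gd {A}. Arguments spi {A}. Arguments bsub {A}.

(* Main.v *)
Require Import Defs.
From Stdlib Require Import Reals Lra Lia.
From Stdlib Require Ncring Ncring_tac.
Open Scope R_scope.

Lemma cabs_ge0 a : 0 <= cabs a.
Proof. unfold cabs; apply sqrt_pos. Qed.

Lemma cabs_mul a b : cabs (cmul a b) = cabs a * cabs b.
Proof.
  unfold cabs, cmul; simpl. rewrite <- sqrt_mult by nra. f_equal; ring.
Qed.

Lemma cabs_add a b : cabs (cadd a b) <= cabs a + cabs b.
Proof.
  destruct a as [a1 a2], b as [b1 b2]; unfold cabs, cadd; cbn [cRe cIm].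
  set (A := a1^2 + a2^2). set (B := b1^2+b2^2).
  assert (HA : 0 <= A) by (unfold A; nra). assert (HB : 0 <= B) by (unfold B; nra).
  pose proof (sqrt_sqrt A HA) as sA. pose proof (sqrt_sqrt B HB) as sB.
  pose proof (sqrt_pos A). pose proof (sqrt_pos B).
  assert (CS : a1*b1 + a2*b2 <= sqrt A * sqrt B).
  { rewrite <- sqrt_mult by auto.
    destruct (Rle_or_lt (a1*b1+a2*b2) 0). { pose proof (sqrt_pos (A*B)); lra. }
    rewrite <- (sqrt_pow2 (a1*b1+a2*b2)) by lra. apply sqrt_le_1_alt.
    unfold A, B. pose proof (pow2_ge_0 (a1*b2-a2*b1)). nra. }
  rewrite <- (sqrt_pow2 (sqrt A + sqrt B)) by lra. apply sqrt_le_1_alt.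
  unfold A, B in *. nra.
Qed.

Lemma cabs_c0 : cabs c0 = 0.
Proof. unfold cabs, c0; cbn [cRe cIm]. replace (0^2+0^2) with 0 by ring. apply sqrt_0. Qed.

Lemma cabs_c1 : cabs Defs.c1 = 1.
Proof. unfold cabs, Defs.c1; cbn [cRe cIm]. replace (1^2+0^2) with 1 by ring. apply sqrt_1. Qed.

Lemma cabs_pos a : a <> c0 -> 0 < cabs a.
Proof.
  intro H. destruct (cabs_ge0 a) as [h|h]; auto. exfalso. apply H.
  unfold cabs in h. symmetry in h. apply sqrt_eq_0 in h; [|nra].
  destruct a as [x y]; unfold c0; simpl in *. f_equal; nra.
Qed.

Fixpoint cpow (a : cplx) (n : nat) : cplx :=
  match n with O => Defs.c1 | S k => cmul (cpow a k) a end.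

Lemma cabs_cpow a n : cabs (cpow a n) = cabs a ^ n.
Proof. induction n; simpl. apply cabs_c1. rewrite cabs_mul, IHn; ring. Qed.

Lemma cmulC a b : cmul a b = cmul b a.
Proof. unfold cmul; f_equal; ring. Qed.

Lemma caddC a b : cadd a b = cadd b a.
Proof. unfold cadd; f_equal; ring. Qed.

Definition cinv (a : cplx) :=
  mkC (cRe a / (cRe a ^ 2 + cIm a ^ 2)) (- cIm a / (cRe a ^ 2 + cIm a ^ 2)).

Lemma cinv_l a : a <> c0 -> cmul (cinv a) a = Defs.c1.
Proof.
  intro H. assert (h : cRe a ^ 2 + cIm a ^ 2 <> 0).
  { intro h. apply H. destruct a as [x y]; unfold c0; simpl in *. f_equal; nra. }
  unfold cmul, cinv, Defs.c1; cbn [cRe cIm]. f_equal; field; auto.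
Qed.

Lemma INR_le_pow2 n : INR n <= 2 ^ n.
Proof.
  induction n. simpl; lra. rewrite S_INR. simpl.
  assert (1 <= 2 ^ n) by (apply pow_R1_Rle; lra). lra.
Qed.

Lemma pow2_big K : exists N, forall n, (N <= n)%nat -> K <= 2 ^ n.
Proof.
  destruct (INR_unbounded K) as [N HN]. exists N. intros n Hn.
  pose proof (INR_le_pow2 n). apply le_INR in Hn. lra.
Qed.

Lemma geom_small C (HC : 0 <= C) eps (He : 0 < eps) :
  exists N, forall n, (N <= n)%nat -> C * (/2) ^ n < eps.
Proof.
  destruct (pow_lt_1_zero (/2)) with (y := eps / (C+1)) as [N HN].
  { rewrite Rabs_right; lra. } { apply Rdiv_lt_0_compat; lra. }
  exists N. intros n Hn. specialize (HN n Hn). rewrite Rabs_right in HN.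
  2:{ apply Rle_ge, pow_le; lra. }
  assert (0 <= (/2)^n) by (apply pow_le; lra).
  apply Rmult_lt_compat_l with (r := C+1) in HN; [|lra].
  replace ((C+1) * (eps / (C+1))) with eps in HN by (field; lra). nra.
Qed.

Lemma Rdiv_le_0_compat a b : 0 <= a -> 0 < b -> 0 <= a / b.
Proof. intros. unfold Rdiv. apply Rmult_le_pos; auto. left; apply Rinv_0_lt_compat; auto. Qed.

Record NR := {
 T :> Type; zr : T; on : T; ad : T->T->T; mu : T->T->T; op : T->T;
 sc : cplx -> T -> T; nr : T -> R;
 adA : forall x y w, ad x (ad y w) = ad (ad x y) w;
 adC : forall x y, ad x y = ad y x;
 ad0 : forall x, ad x zr = x;
 adN : forall x, ad x (op x) = zr;
 muA : forall x y w, mu x (mu y w) = mu (mu x y) w;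
 mu1l : forall x, mu on x = x;
 mu1r : forall x, mu x on = x;
 muDl : forall x y w, mu (ad x y) w = ad (mu x w) (mu y w);
 muDr : forall x y w, mu x (ad y w) = ad (mu x y) (mu x w);
 sc1 : forall x, sc Defs.c1 x = x;
 scA : forall a b x, sc a (sc b x) = sc (cmul a b) x;
 scDl : forall a b x, sc (cadd a b) x = ad (sc a x) (sc b x);
 scMl : forall a x y, sc a (mu x y) = mu (sc a x) y;
 scMr : forall a x y, sc a (mu x y) = mu x (sc a y);
 nr_ge0 : forall x, 0 <= nr x;
 nr_eq0 : forall x, nr x = 0 -> x = zr;
 nrD : forall x y, nr (ad x y) <= nr x + nr y;
 nrZ : forall a x, nr (sc a x) = cabs a * nr x;
 nrM : forall x y, nr (mu x y) <= nr x * nr y }.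

Arguments zr {_}. Arguments on {_}. Arguments ad {_}. Arguments mu {_}.
Arguments op {_}. Arguments sc {_}. Arguments nr {_}.

Global Instance NRops (N:NR) : @Ncring.Ring_ops (T N) (@zr N) (@on N) (@ad N) (@mu N)
  (fun x y => ad x (op y)) (@op N) eq := {}.
Global Instance NRring (N:NR) : Ncring.Ring (Ro:=NRops N).
Proof. constructor; try (exact _); intros; cbv [Algebra_syntax.zero Algebra_syntax.one Algebra_syntax.addition Algebra_syntax.multiplication Algebra_syntax.subtraction Algebra_syntax.opposite Algebra_syntax.equality Ncring.zero_notation Ncring.one_notation Ncring.add_notation Ncring.mul_notation Ncring.sub_notation Ncring.opp_notation Ncring.eq_notation].
 - rewrite adC; apply ad0.
 - apply adC. - apply adA. - apply mu1l. - apply mu1r. - apply muA.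
 - apply muDl. - apply muDr. - reflexivity. - apply adN.
Qed.
Ltac nring := Ncring_tac.non_commutative_ring.

Section Gen.
Variable N : NR.
Definition sb (x y : N) := ad x (op y).
Definition pw (x : N) n := powg (@mu N) on x n.
Definition qn (y : N) := quasinil (@mu N) on (@nr N) y.
Definition gdN (x xd : N) := gdrazin (@ad N) (@mu N) (@op N) on (@nr N) x xd.

Lemma mu0l (x : N) : mu zr x = zr. Proof. nring. Qed.
Lemma mu0r (x : N) : mu x zr = zr. Proof. nring. Qed.

Lemma pw_S (x : N) n : pw x (S n) = mu (pw x n) x. Proof. reflexivity. Qed.
Lemma pw_0 (x : N) : pw x 0 = on. Proof. reflexivity. Qed.

Lemma pw_Sl (x : N) n : pw x (S n) = mu x (pw x n).
Proof.
  induction n. rewrite pw_S, pw_0, mu1l, mu1r; reflexivity.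
  rewrite (pw_S x (S n)). rewrite IHn at 1. rewrite <- muA; reflexivity.
Qed.

Lemma pw_add (x : N) m n : pw x (m + n) = mu (pw x m) (pw x n).
Proof.
  induction n. rewrite Nat.add_0_r, pw_0, mu1r; reflexivity.
  rewrite <- plus_n_Sm, !pw_S, IHn, muA; reflexivity.
Qed.

Lemma comm_pw (x y : N) n : mu x y = mu y x -> mu (pw x n) y = mu y (pw x n).
Proof.
  intro H. induction n. rewrite pw_0, mu1l, mu1r; reflexivity.
  rewrite pw_S, <- muA, H, muA, IHn, muA; reflexivity.
Qed.

Lemma pw_mulc (x y : N) n : mu x y = mu y x -> pw (mu x y) n = mu (pw x n) (pw y n).
Proof.
  intro H. induction n. rewrite !pw_0, mu1l; reflexivity.
  rewrite !pw_S, IHn.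
  assert (H2 : mu (pw y n) x = mu x (pw y n)) by (apply comm_pw; symmetry; auto).
  transitivity (mu (pw x n) (mu (mu (pw y n) x) y)). nring.
  rewrite H2. nring.
Qed.

Lemma pw_idem_e (e : N) n : mu e e = e -> pw e (S n) = e.
Proof.
  intro H. induction n. rewrite pw_S, pw_0, mu1l; reflexivity.
  rewrite pw_S, IHn; auto.
Qed.

Lemma pw_idem (a e : N) n : mu e e = e -> mu a e = mu e a ->
  pw (mu a e) (S n) = mu (pw a (S n)) e.
Proof. intros He Hc. rewrite pw_mulc by auto. rewrite (pw_idem_e e n) by auto. reflexivity. Qed.

Lemma nr_pw (x : N) n : nr (pw x (S n)) <= nr x ^ (S n).
Proof.
  induction n. rewrite pw_S, pw_0, mu1l; simpl; lra.
  rewrite pw_S. eapply Rle_trans. apply nrM.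
  replace (nr x ^ S (S n)) with (nr x ^ S n * nr x) by (simpl; ring).
  apply Rmult_le_compat_r. apply nr_ge0. apply IHn.
Qed.

Lemma sc_c0 (x : N) : sc c0 x = zr.
Proof.
  assert (E : cadd c0 c0 = c0) by (unfold cadd, c0; cbn [cRe cIm]; f_equal; ring).
  pose proof (scDl N c0 c0 x) as H. rewrite E in H.
  transitivity (ad (ad (sc c0 x) (sc c0 x)) (op (sc c0 x))). nring.
  rewrite <- H. apply adN.
Qed.

Lemma nr_zr : nr (@zr N) = 0.
Proof. rewrite <- (sc_c0 zr), nrZ, cabs_c0; ring. Qed.

Lemma sc_zr a : sc a (@zr N) = zr.
Proof. rewrite <- (mu0l zr) at 1. rewrite scMr, mu0l; reflexivity. Qed.

Lemma qn_crit (y : N) :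
  (forall d, 0 < d -> exists K M, forall n, (M <= n)%nat -> nr (pw y n) <= K * d ^ n) -> qn y.
Proof.
  intros H eps He. destruct (H (eps/2)) as [K [M HM]]. lra.
  destruct (pow2_big K) as [M2 HM2]. exists (max M M2). intros n Hn.
  eapply Rle_trans. apply HM; lia.
  assert (0 <= (eps/2)^n) by (apply pow_le; lra).
  specialize (HM2 n ltac:(lia)).
  replace (eps ^ n) with (2 ^ n * (eps/2)^n).
  2:{ rewrite <- Rpow_mult_distr. f_equal. field. }
  apply Rmult_le_compat_r; auto.
Qed.

Lemma qn_K (y : N) : qn y -> forall d, 0 < d -> exists K, 0 <= K /\ forall n, nr (pw y n) <= K * d ^ n.
Proof.
  intros H d Hd. destruct (H d Hd) as [M HM].
  assert (A : forall M', exists K, 0 <= K /\ forall n, (n < M')%nat -> nr (pw y n) <= K * d ^ n).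
  { induction M'. exists 0. split. lra. intros; lia.
    destruct IHM' as [K [HK HK']].
    assert (0 < d ^ M') by (apply pow_lt; auto).
    exists (K + nr (pw y M') / d ^ M'). split.
    { pose proof (nr_ge0 N (pw y M')). assert (0 <= nr (pw y M') / d ^ M')
       by (apply Rdiv_le_0_compat; lra). lra. }
    intros n Hn. assert (0 < d ^ n) by (apply pow_lt; auto).
    assert (0 <= nr (pw y M') / d ^ M') by (apply Rdiv_le_0_compat; [apply nr_ge0|lra]).
    destruct (Nat.eq_dec n M') as [->|Hne].
    - rewrite Rmult_plus_distr_r. unfold Rdiv. rewrite Rmult_assoc, Rinv_l by lra.
      assert (0 <= K * d ^ M') by nra. lra.
    - specialize (HK' n ltac:(lia)). nra. }
  destruct (A M) as [K [HK HK']]. exists (K + 1). split. lra. intros n.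
  assert (0 < d ^ n) by (apply pow_lt; auto).
  destruct (Nat.lt_ge_cases n M) as [Hl|Hl]. specialize (HK' n Hl). nra.
  specialize (HM n Hl). unfold pw. nra.
Qed.

Lemma zero_lim (w y : N) : qn y ->
  (exists C B, 0 <= C /\ 0 <= B /\ forall k, (1 <= k)%nat -> nr w <= C * B ^ k * nr (pw y k)) ->
  w = zr.
Proof.
  intros Hq [C [B [HC [HB H]]]]. apply nr_eq0.
  set (eps := / (2 * (B+1))).
  assert (He : 0 < eps) by (unfold eps; apply Rinv_0_lt_compat; lra).
  assert (HBe : B * eps <= / 2).
  { unfold eps. rewrite Rinv_mult. 
    assert (0 < / (B+1)) by (apply Rinv_0_lt_compat; lra).
    assert (B * / (B+1) <= 1). { apply (Rmult_le_reg_r (B+1)). lra.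
      rewrite Rmult_assoc, Rinv_l by lra. lra. }
    assert (0 < /2) by lra. nra. }
  destruct (Hq eps He) as [M HM].
  assert (Hb : forall k, (max M 1 <= k)%nat -> nr w <= C * (/2) ^ k).
  { intros k Hk. apply Rle_trans with (C * B^k * nr (pw y k)). apply H. lia.
    specialize (HM k ltac:(lia)). fold (pw y k) in HM.
    assert (0 <= B ^ k) by (apply pow_le; auto).
    assert (0 <= C * B ^ k) by (apply Rmult_le_pos; auto).
    apply Rle_trans with (C * B ^ k * eps ^ k). apply Rmult_le_compat_l; auto.
    rewrite Rmult_assoc, <- Rpow_mult_distr. apply Rmult_le_compat_l; auto.
    apply pow_incr. split; auto. apply Rmult_le_pos; lra. }
  pose proof (nr_ge0 N w).
  destruct (Rle_or_lt (nr w) 0). lra. exfalso.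
  destruct (geom_small C HC (nr w) H1) as [M' HM'].
  specialize (Hb (max (max M 1) M') ltac:(lia)).
  specialize (HM' (max (max M 1) M') ltac:(lia)). lra.
Qed.

Lemma even_odd_dec n : exists m, n = (m + m)%nat \/ n = S (m + m).
Proof.
  induction n. exists 0%nat; left; reflexivity.
  destruct IHn as [m [->| ->]]. exists m; right; reflexivity.
  exists (S m); left; lia.
Qed.

Lemma qn_sq (y : N) : qn (mu y y) -> qn y.
Proof.
  intros Hq. apply qn_crit. intros d Hd.
  destruct (qn_K _ Hq (d * d)) as [K [HK HK']]. nra.
  exists (K + K * nr y / d), 0%nat. intros n _.
  assert (E : forall m, pw (mu y y) m = pw y (m + m)).
  { intro m. rewrite pw_mulc by reflexivity. rewrite pw_add; reflexivity. }
  assert (Hdm : forall m, (d * d) ^ m = d ^ (m + m)).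
  { intro m. rewrite Rpow_mult_distr, pow_add; reflexivity. }
  assert (0 <= K * nr y / d) by (apply Rdiv_le_0_compat; [apply Rmult_le_pos; [auto|apply nr_ge0]|auto]).
  destruct (even_odd_dec n) as [m [-> | ->]].
  - specialize (HK' m). rewrite E, Hdm in HK'. assert (0 < d ^ (m+m)) by (apply pow_lt; auto). nra.
  - specialize (HK' m). rewrite E, Hdm in HK'. rewrite pw_S.
    eapply Rle_trans. apply nrM.
    assert (0 < d ^ (m+m)) by (apply pow_lt; auto).
    pose proof (nr_ge0 N y).
    replace ((K + K * nr y / d) * d ^ S (m + m)) with (K * d ^ S (m+m) + K * nr y * d ^ (m+m)).
    2:{ simpl. field. lra. }
    assert (0 <= K * d ^ S (m+m)) by (apply Rmult_le_pos; auto; apply pow_le; lra).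
    assert (nr (pw y (m+m)) * nr y <= K * d ^ (m+m) * nr y) by (apply Rmult_le_compat_r; auto).
    lra.
Qed.

Lemma gd_half (a x y : N) : gdN a x -> gdN a y ->
  mu (mu a x) (sb on (mu a y)) = zr /\ mu (sb on (mu a y)) (mu a x) = zr.
Proof.
  intros [Hx1 [Hx2 Hx3]] [Hy1 [Hy2 Hy3]].
  assert (Hff : mu (mu a y) (mu a y) = mu a y).
  { transitivity (mu a (mu (mu y a) y)). nring. rewrite <- Hy2. reflexivity. }
  assert (Hee : mu (mu x a) (mu x a) = mu x a).
  { transitivity (mu (mu (mu x a) x) a). nring. rewrite <- Hx2. reflexivity. }
  assert (Hg : mu (sb on (mu a y)) (sb on (mu a y)) = sb on (mu a y)).
  { transitivity (ad (ad on (op (mu a y))) (ad (op (mu a y)) (mu (mu a y) (mu a y)))).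
    unfold sb; nring. rewrite Hff. unfold sb; nring. }
  assert (Hag : mu a (sb on (mu a y)) = mu (sb on (mu a y)) a).
  { transitivity (ad a (op (mu a (mu y a)))). rewrite Hy1. unfold sb; nring.
    unfold sb; nring. }
  assert (Hn : mu a (sb on (mu a y)) = ad a (op (mu (mu a a) y))) by (unfold sb; nring).
  set (g := sb on (mu a y)) in *.
  set (n := mu a g).
  assert (Hq : qn n) by (unfold n; rewrite Hn; exact Hy3).
  assert (Hxa : mu x a = mu a x) by exact Hx1.
  split; apply zero_lim with (y := n); auto.
  - exists 1, (nr x). split. lra. split. apply nr_ge0.
    intros k Hk. destruct k as [|k]. lia.
    assert (E : mu (mu a x) g = mu (pw x (S k)) (pw n (S k))).
    { rewrite <- Hxa. rewrite <- (pw_idem_e (mu x a) k Hee) at 1.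
      rewrite pw_mulc by exact Hxa. unfold n. rewrite pw_idem by auto. nring. }
    rewrite E. eapply Rle_trans. apply nrM. rewrite Rmult_1_l.
    apply Rmult_le_compat_r. apply nr_ge0. apply nr_pw.
  - exists 1, (nr x). split. lra. split. apply nr_ge0.
    intros k Hk. destruct k as [|k]. lia.
    assert (Hee' : mu (mu a x) (mu a x) = mu a x) by (rewrite <- Hxa; exact Hee).
    assert (E : mu g (mu a x) = mu (pw n (S k)) (pw x (S k))).
    { rewrite <- (pw_idem_e (mu a x) k Hee') at 1.
      rewrite pw_mulc by (symmetry; exact Hxa).
      transitivity (mu (mu g (pw a (S k))) (pw x (S k))). nring.
      rewrite <- (comm_pw a g (S k) Hag).
      unfold n. rewrite pw_idem by auto. reflexivity. }
    rewrite E. eapply Rle_trans. apply nrM. rewrite Rmult_1_l, (Rmult_comm (nr (pw n (S k)))).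
    apply Rmult_le_compat_r. apply nr_ge0. apply nr_pw.
Qed.

Lemma gd_unique (a x y : N) : gdN a x -> gdN a y -> x = y.
Proof.
  intros Hx Hy. destruct (gd_half a x y Hx Hy) as [He1 He2].
  destruct (gd_half a y x Hy Hx) as [Hf1 Hf2].
  assert (E2 : mu a x = mu (mu a y) (mu a x)).
  { transitivity (ad (mu (mu a y) (mu a x)) (mu (sb on (mu a y)) (mu a x))).
    unfold sb; nring. rewrite He2; nring. }
  assert (F1 : mu a y = mu (mu a y) (mu a x)).
  { transitivity (ad (mu (mu a y) (mu a x)) (mu (mu a y) (sb on (mu a x)))).
    unfold sb; nring. rewrite Hf1; nring. }
  assert (Eq : mu a x = mu a y) by (rewrite E2, <- F1; reflexivity).
  destruct Hx as [Hx1 [Hx2 _]]. destruct Hy as [Hy1 [Hy2 _]].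
  rewrite Hx2. transitivity (mu x (mu a x)). nring. rewrite Eq.
  transitivity (mu (mu x a) y). nring. rewrite Hx1, Eq, <- Hy1. symmetry; exact Hy2.
Qed.

Lemma cline (b c w : N) : gdN (mu b c) w -> gdN (mu c b) (mu (mu c (mu w w)) b).
Proof.
  intros [H1 [H2 H3]]. set (u := mu b c) in *.
  assert (Hwwu : mu (mu w w) u = w).
  { transitivity (mu w (mu w u)). nring. rewrite H1.
    transitivity (mu (mu w u) w). nring. symmetry; exact H2. }
  assert (Huww : mu (mu u w) w = w) by (rewrite <- H1; symmetry; exact H2).
  split; [|split].
  - transitivity (mu c (mu (mu (mu w w) u) b)). unfold u; nring. rewrite Hwwu.
    transitivity (mu c (mu (mu (mu u w) w) b)). rewrite Huww; reflexivity. unfold u; nring.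
  - symmetry.
    transitivity (mu c (mu (mu (mu (mu w w) u) (mu (mu u w) w)) b)). unfold u; nring.
    rewrite Hwwu, Huww. nring.
  - set (s := sb on (mu u w)).
    set (yq := ad u (op (mu (mu u u) w))) in *.
    assert (Hel : ad (mu c b) (op (mu (mu (mu c b) (mu c b)) (mu (mu c (mu w w)) b)))
                  = mu (mu c s) b).
    { transitivity (ad (mu c b) (op (mu c (mu (mu u (mu (mu u w) w)) b)))). unfold u; nring.
      rewrite Huww. unfold s, sb; nring. }
    rewrite Hel.
    assert (Hsu : mu s u = yq).
    { transitivity (ad u (op (mu u (mu w u)))). unfold s, sb; nring.
      rewrite H1. unfold yq; nring. }
    assert (Hss : mu s s = s).
    { transitivity (ad (ad on (op (mu u w))) (ad (op (mu u w)) (mu u (mu (mu w u) w)))).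
      unfold s, sb; nring. rewrite <- H2. unfold s, sb; nring. }
    assert (Hus : mu u s = mu s u).
    { transitivity (ad u (op (mu u (mu u w)))). unfold s, sb; nring.
      rewrite <- H1. unfold s, sb. nring. }
    assert (Hsus : mu (mu s u) s = mu s u).
    { transitivity (mu s (mu u s)). nring. rewrite Hus.
      transitivity (mu (mu s s) u). nring. rewrite Hss. reflexivity. }
    assert (Hp : forall k, pw (mu (mu c s) b) (S k) = mu (mu c (pw yq k)) (mu s b)).
    { induction k. rewrite pw_S, !pw_0. nring.
      rewrite pw_S, IHk.
      transitivity (mu (mu c (mu (pw yq k) (mu s u))) (mu s b)). unfold u; nring.
      rewrite Hsu, (pw_S yq k). nring. }
    apply qn_crit. intros d Hd. destruct (qn_K yq H3 d Hd) as [K [HK HK']].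
    exists (nr c * nr (mu s b) * K / d), 1%nat. intros n Hn.
    destruct n as [|k]. lia. rewrite Hp.
    eapply Rle_trans. apply nrM. eapply Rle_trans. apply Rmult_le_compat_r. apply nr_ge0. apply nrM.
    pose proof (nr_ge0 N c). pose proof (nr_ge0 N (mu s b)).
    specialize (HK' k).
    replace (nr c * nr (mu s b) * K / d * d ^ S k) with (nr c * (K * d ^ k) * nr (mu s b))
      by (simpl; field; lra).
    apply Rmult_le_compat_r; auto. apply Rmult_le_compat_l; auto.
Qed.

Notation ps := (psum (@ad N) zr).

Lemma psum_split (f g : nat -> N) m : ps (fun k => ad (f k) (g k)) m = ad (ps f m) (ps g m).
Proof. induction m; simpl. nring. rewrite IHm. nring. Qed.

Lemma psum_mur (f : nat -> N) w m : mu (ps f m) w = ps (fun k => mu (f k) w) m.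
Proof. induction m; simpl. nring. rewrite <- IHm. nring. Qed.

Lemma psum_shift (f : nat -> N) m : ps f (S m) = ad (f 0%nat) (ps (fun k => f (S k)) m).
Proof.
  induction m. simpl. nring.
  change (ps f (S (S m))) with (ad (ps f (S m)) (f (S m))). rewrite IHm. simpl. nring.
Qed.

Lemma psum_ext (f g : nat -> N) m : (forall k, (k < m)%nat -> f k = g k) -> ps f m = ps g m.
Proof.
  induction m; intros H; simpl. reflexivity. rewrite IHm by (intros; apply H; lia).
  rewrite H by lia. reflexivity.
Qed.

Lemma psum_zero m : ps (fun _ => zr) m = zr.
Proof. induction m; simpl. reflexivity. rewrite IHm. nring. Qed.

Lemma nr_psum (f : nat -> N) m B : (forall k, (k < m)%nat -> nr (f k) <= B) ->
  nr (ps f m) <= INR m * B.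
Proof.
  induction m; intros H. simpl. rewrite nr_zr. simpl; lra.
  cbn [psum]. eapply Rle_trans. apply nrD. rewrite S_INR.
  assert (nr (ps f m) <= INR m * B) by (apply IHm; intros; apply H; lia).
  specialize (H m ltac:(lia)). lra.
Qed.

Lemma pow_le1 c n : 0 <= c <= 1 -> c ^ n <= 1.
Proof.
  intros H. induction n; simpl. lra.
  assert (0 <= c ^ n) by (apply pow_le; lra). nra.
Qed.

Section LamSum.
Variables (x y : N) (m0 : cplx).
Hypothesis Hm : cabs m0 <= 1.
Hypothesis Hxy : mu x y = sc m0 (mu y x).

Fixpoint cf (n k : nat) : cplx :=
  match n with
  | O => match k with O => Defs.c1 | S _ => c0 end
  | S n' => match k with
            | O => cf n' O
            | S k' => cadd (cf n' k') (cmul (cf n' (S k')) (cpow m0 (S k')))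
            end
  end.

Lemma cadd_0mul a b : cadd a (cmul c0 b) = a.
Proof. destruct a; unfold cadd, cmul, c0; simpl; f_equal; ring. Qed.

Lemma cf_zero n k : (n < k)%nat -> cf n k = c0.
Proof.
  revert k; induction n; intros k Hk. destruct k. lia. reflexivity.
  destruct k. lia. simpl. rewrite (IHn k) by lia. rewrite (IHn (S k)) by lia.
  apply cadd_0mul.
Qed.

Lemma cf_bound n k : cabs (cf n k) <= 2 ^ n.
Proof.
  revert k; induction n; intros k. destruct k; simpl. rewrite cabs_c1; lra. rewrite cabs_c0; lra.
  destruct k; cbn [cf]. specialize (IHn 0%nat). simpl (2 ^ S n). assert (1 <= 2 ^ n) by (apply pow_R1_Rle; lra). lra.
  eapply Rle_trans. apply cabs_add. rewrite cabs_mul, cabs_cpow.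
  assert (cabs m0 ^ S k <= 1) by (apply pow_le1; split; [apply cabs_ge0|auto]).
  assert (0 <= cabs m0 ^ S k) by (apply pow_le; apply cabs_ge0).
  specialize (IHn k) as H1. specialize (IHn (S k)) as H2.
  pose proof (cabs_ge0 (cf n (S k))). simpl (2 ^ S n). nra.
Qed.

Lemma xk_y k : mu (pw x k) y = sc (cpow m0 k) (mu y (pw x k)).
Proof.
  induction k. rewrite pw_0. simpl. rewrite sc1. nring.
  rewrite pw_S. transitivity (mu (pw x k) (mu x y)). nring. rewrite Hxy.
  rewrite <- scMr. transitivity (sc m0 (mu (mu (pw x k) y) x)). f_equal; nring.
  rewrite IHk, <- scMl, scA. simpl cpow. rewrite cmulC. f_equal. nring.
Qed.

Definition Tm n k := sc (cf n k) (mu (pw y (n - k)) (pw x k)).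

Lemma Tm_zero n k : (n < k)%nat -> Tm n k = zr.
Proof. intros. unfold Tm. rewrite cf_zero by auto. apply sc_c0. Qed.

Lemma Tm_S0 n : Tm (S n) 0 = mu (Tm n 0) y.
Proof.
  unfold Tm. rewrite <- scMl. simpl cf. f_equal.
  replace (S n - 0)%nat with (S n) by lia. replace (n - 0)%nat with n by lia.
  rewrite pw_S, pw_0. nring.
Qed.

Lemma Tm_SS n k : Tm (S n) (S k) = ad (mu (Tm n k) x) (mu (Tm n (S k)) y).
Proof.
  unfold Tm. rewrite <- !scMl. simpl cf.
  replace (S n - S k)%nat with (n - k)%nat by lia.
  destruct (Nat.lt_ge_cases k n) as [Hl|Hl].
  - replace (n - k)%nat with (S (n - S k)) by lia.
    remember (n - S k)%nat as j.
    rewrite scDl. f_equal. f_equal. rewrite (pw_S x k); nring.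
    rewrite <- scA. f_equal. symmetry.
    transitivity (mu (pw y j) (mu (pw x (S k)) y)). nring.
    rewrite xk_y, <- scMr. f_equal.
    rewrite (pw_S y j). nring.
  - rewrite (cf_zero n (S k)) by lia. rewrite cadd_0mul, sc_c0, ad0. f_equal.
    remember (n - k)%nat as j. rewrite (pw_S x k). nring.
Qed.

Lemma expand n m : (n < m)%nat -> pw (ad x y) n = ps (Tm n) m.
Proof.
  revert m. induction n; intros m Hm'.
  - destruct m as [|m']. lia. rewrite psum_shift.
    rewrite (psum_ext _ (fun _ => zr)) by (intros; apply Tm_zero; lia).
    rewrite psum_zero. unfold Tm. simpl cf. rewrite sc1, !pw_0. nring.
  - destruct m as [|m']. lia. rewrite pw_S, (IHn m') by lia.
    rewrite psum_shift, Tm_S0.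
    rewrite (psum_ext (fun k => Tm (S n) (S k)) (fun k => ad (mu (Tm n k) x) (mu (Tm n (S k)) y)))
      by (intros; apply Tm_SS).
    rewrite psum_split.
    assert (E : ps (fun k => mu (Tm n k) y) m' = ps (fun k => mu (Tm n k) y) (S m')).
    { simpl. rewrite (Tm_zero n m') by lia. rewrite mu0l. nring. }
    transitivity (ad (ps (fun k => mu (Tm n k) x) m') (ps (fun k => mu (Tm n k) y) m')).
    { rewrite muDr, !psum_mur. reflexivity. }
    rewrite E, psum_shift. nring.
Qed.

Lemma Tm_bound Kx Ky d n k : 0 <= Kx -> 0 <= Ky -> 0 < d ->
  (forall j, nr (pw x j) <= Kx * d ^ j) -> (forall j, nr (pw y j) <= Ky * d ^ j) ->
  nr (Tm n k) <= 2 ^ n * Ky * Kx * d ^ n.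
Proof.
  intros HKx HKy Hd Bx By.
  assert (0 <= 2 ^ n * Ky * Kx * d ^ n).
  { apply Rmult_le_pos. apply Rmult_le_pos. apply Rmult_le_pos; auto. apply pow_le; lra. auto.
    apply pow_le; lra. }
  destruct (Nat.lt_ge_cases n k) as [Hl|Hl].
  { rewrite Tm_zero by auto. rewrite nr_zr. auto. }
  unfold Tm. rewrite nrZ. eapply Rle_trans.
  { apply Rmult_le_compat_r. apply nr_ge0. apply cf_bound. }
  replace (2 ^ n * Ky * Kx * d ^ n) with (2 ^ n * ((Ky * d ^ (n - k)) * (Kx * d ^ k))).
  2:{ assert (E: d ^ n = d ^ (n-k) * d ^ k) by (rewrite <- pow_add, Nat.sub_add by auto; reflexivity).
       rewrite E. ring. }
  apply Rmult_le_compat_l. apply pow_le; lra.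
  eapply Rle_trans. apply nrM. apply Rmult_le_compat; auto using nr_ge0.
Qed.

Lemma qn_sum : qn x -> qn y -> qn (ad x y).
Proof.
  intros Hx Hy. apply qn_crit. intros d' Hd'.
  set (d := d' / 4). assert (Hd : 0 < d) by (unfold d; lra).
  destruct (qn_K x Hx d Hd) as [Kx [HKx Bx]]. destruct (qn_K y Hy d Hd) as [Ky [HKy By]].
  exists (2 * Ky * Kx), 0%nat. intros n _.
  rewrite (expand n (S n)) by lia.
  eapply Rle_trans. apply nr_psum. intros k _. apply (Tm_bound Kx Ky d n k); auto.
  pose proof (INR_le_pow2 (S n)).
  assert (0 <= 2 ^ n * Ky * Kx * d ^ n).
  { apply Rmult_le_pos. apply Rmult_le_pos. apply Rmult_le_pos; auto. apply pow_le; lra. auto.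
    apply pow_le; lra. }
  eapply Rle_trans. apply Rmult_le_compat_r. auto. apply H.
  replace d' with (2 * 2 * d) by (unfold d; field).
  rewrite !Rpow_mult_distr. simpl. lra.
Qed.
End LamSum.

Lemma qn_sum_lam (x y : N) lam : lam <> c0 -> mu x y = sc lam (mu y x) ->
  qn x -> qn y -> qn (ad x y).
Proof.
  intros Hl H Hx Hy. destruct (Rle_or_lt (cabs lam) 1).
  - apply (qn_sum x y lam); auto.
  - rewrite adC. apply (qn_sum y x (cinv lam)); auto.
    + pose proof (cabs_mul (cinv lam) lam) as E. rewrite cinv_l, cabs_c1 in E by auto.
      pose proof (cabs_ge0 (cinv lam)). nra.
    + rewrite H, scA, cinv_l by auto. rewrite sc1. reflexivity.
Qed.

Lemma div_bound w L C B0 Y k : 0 < L -> L ^ k * w <= C * B0 ^ k * Y -> w <= C * (B0 / L) ^ k * Y.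
Proof.
  intros HL H. unfold Rdiv. rewrite Rpow_mult_distr, pow_inv.
  assert (0 < L^k) by (apply pow_lt; auto).
  replace w with ((L^k * w) * / L^k) by (field; lra).
  replace (C * (B0 ^ k * / L ^ k) * Y) with ((C * B0^k * Y) * / L^k) by (field; lra).
  apply Rmult_le_compat_r. left; apply Rinv_0_lt_compat; auto. auto.
Qed.

Lemma core (P Q Pd Qd : N) lam : lam <> c0 -> gdN P Pd -> gdN Q Qd ->
  mu P Q = sc lam (mu (mu (mu (sb on (mu P Pd)) Q) P) (sb on (mu Q Qd))) ->
  mu Pd Q = zr /\ mu P Qd = zr /\ mu Qd P = zr /\ mu Q Pd = zr /\ gdN (ad P Q) (ad Pd Qd).
Proof.
  intros Hl [HP1 [HP2 HP3]] [HQ1 [HQ2 HQ3]] H.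
  set (p := sb on (mu P Pd)) in *. set (q := sb on (mu Q Qd)) in *.
  assert (Hpd : mu Pd p = zr).
  { transitivity (ad Pd (op (mu (mu Pd P) Pd))). unfold p, sb; nring. rewrite <- HP2. nring. }
  assert (Hqd : mu q Qd = zr).
  { transitivity (ad Qd (op (mu (mu Q Qd) Qd))). unfold q, sb; nring.
    rewrite <- HQ1, <- HQ2. nring. }
  assert (HPdQ : mu Pd Q = zr).
  { transitivity (mu (mu (mu Pd P) Pd) Q). rewrite <- HP2; reflexivity.
    transitivity (mu (mu Pd (mu P Pd)) Q). nring. rewrite <- HP1.
    transitivity (mu (mu Pd Pd) (mu P Q)). nring. rewrite H, <- scMr.
    transitivity (sc lam (mu (mu (mu (mu Pd (mu Pd p)) Q) P) q)). f_equal; nring.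
    rewrite Hpd, mu0r, !mu0l. apply sc_zr. }
  assert (HPQd : mu P Qd = zr).
  { transitivity (mu P (mu (mu Qd Q) Qd)). rewrite <- HQ2; reflexivity. rewrite HQ1.
    transitivity (mu (mu P Q) (mu Qd Qd)). nring. rewrite H, <- scMl.
    transitivity (sc lam (mu (mu (mu p Q) P) (mu (mu q Qd) Qd))). f_equal; nring.
    rewrite Hqd, mu0l, mu0r. apply sc_zr. }
  assert (HpQ : mu p Q = Q).
  { transitivity (ad Q (op (mu P (mu Pd Q)))). unfold p, sb; nring. rewrite HPdQ. nring. }
  assert (HPq : mu P q = P).
  { transitivity (ad P (op (mu P (mu Q Qd)))). unfold q, sb; nring. rewrite <- HQ1.
    transitivity (ad P (op (mu (mu P Qd) Q))). nring. rewrite HPQd. nring. }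
  assert (HPQ : mu P Q = sc lam (mu Q P)).
  { rewrite H at 1. f_equal. transitivity (mu (mu p Q) (mu P q)). nring.
    rewrite HpQ, HPq. reflexivity. }
  assert (Hqq : mu q q = q).
  { transitivity (ad (ad on (op (mu Q Qd))) (ad (op (mu Q Qd)) (mu Q (mu (mu Qd Q) Qd)))).
    unfold q, sb; nring. rewrite <- HQ2. unfold q, sb; nring. }
  assert (HQq : mu Q q = mu q Q).
  { transitivity (ad Q (op (mu Q (mu Q Qd)))). unfold q, sb; nring.
    rewrite <- HQ1. unfold q, sb; nring. }
  assert (Hpp : mu p p = p).
  { transitivity (ad (ad on (op (mu P Pd))) (ad (op (mu P Pd)) (mu P (mu (mu Pd P) Pd)))).
    unfold p, sb; nring. rewrite <- HP2. unfold p, sb; nring. }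
  assert (HPp : mu P p = mu p P).
  { transitivity (ad P (op (mu P (mu P Pd)))). unfold p, sb; nring.
    rewrite <- HP1. unfold p, sb; nring. }
  assert (HqnQ : qn (mu Q q)) by (replace (mu Q q) with (ad Q (op (mu (mu Q Q) Qd))) by (unfold q, sb; nring); exact HQ3).
  assert (HqnP : qn (mu P p)) by (replace (mu P p) with (ad P (op (mu (mu P P) Pd))) by (unfold p, sb; nring); exact HP3).
  assert (HL : 0 < cabs lam) by (apply cabs_pos; auto).
  assert (HQdP : mu Qd P = zr).
  { assert (Ea : forall k, mu P (pw Q k) = sc (cpow lam k) (mu (pw Q k) P)).
    { induction k. rewrite pw_0. simpl cpow. rewrite sc1. nring.
      rewrite pw_S. transitivity (mu (mu P (pw Q k)) Q). nring. rewrite IHk, <- scMl.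
      transitivity (sc (cpow lam k) (mu (pw Q k) (mu P Q))). f_equal; nring.
      rewrite HPQ, <- scMr, scA. simpl cpow. f_equal. nring. }
    assert (Eb : forall k, Qd = mu (pw Qd (S k)) (pw Q k)).
    { assert (E0 : Qd = mu (mu Qd Qd) Q).
      { transitivity (mu (mu Qd Q) Qd). exact HQ2.
        transitivity (mu Qd (mu Q Qd)). nring. rewrite <- HQ1. nring. }
      induction k. rewrite pw_S, !pw_0. nring.
      rewrite (pw_Sl Qd (S k)), (pw_S Q k).
      transitivity (mu (mu Qd (mu (pw Qd (S k)) (pw Q k))) Q). 2: nring.
      rewrite <- IHk. exact E0. }
    assert (Ed : forall k, mu P (pw Q (S k)) = mu P (pw (mu Q q) (S k))).
    { intro k. rewrite pw_idem by auto. rewrite (comm_pw Q q (S k) HQq).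
      transitivity (mu (mu P q) (pw Q (S k))). rewrite HPq; reflexivity. nring. }
    apply zero_lim with (y := mu Q q); auto.
    exists (nr Qd * nr P), (nr Qd / cabs lam). split.
    apply Rmult_le_pos; apply nr_ge0. split. apply Rdiv_le_0_compat. apply nr_ge0. auto.
    intros k Hk. destruct k as [|k]. lia.
    apply div_bound. auto.
    rewrite <- cabs_cpow, <- nrZ.
    assert (E : sc (cpow lam (S k)) (mu Qd P) = mu (pw Qd (S (S k))) (mu P (pw (mu Q q) (S k)))).
    { rewrite <- Ed, Ea, <- scMr.
      transitivity (sc (cpow lam (S k)) (mu (mu (pw Qd (S (S k))) (pw Q (S k))) P)).
      rewrite <- Eb. reflexivity. f_equal; nring. }
    rewrite E. eapply Rle_trans. apply nrM. eapply Rle_trans. apply Rmult_le_compat_r. apply nr_ge0. apply nr_pw.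
    eapply Rle_trans. apply Rmult_le_compat_l. apply pow_le, nr_ge0. apply nrM.
    simpl (nr Qd ^ S (S k)). simpl (nr Qd ^ S k). pose proof (nr_ge0 N Qd).
    pose proof (nr_ge0 N P). pose proof (nr_ge0 N (pw (mu Q q) (S k))).
    assert (0 <= nr Qd ^ k) by (apply pow_le; auto). nra. }
  assert (HQPd : mu Q Pd = zr).
  { assert (Ea : forall k, mu (pw P k) Q = sc (cpow lam k) (mu Q (pw P k))).
    { induction k. rewrite pw_0. simpl cpow. rewrite sc1. nring.
      rewrite pw_S. transitivity (mu (pw P k) (mu P Q)). nring. rewrite HPQ, <- scMr.
      transitivity (sc lam (mu (mu (pw P k) Q) P)). f_equal; nring.
      rewrite IHk, <- scMl, scA. simpl cpow. rewrite cmulC. f_equal. nring. }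
    assert (Eb : forall k, Pd = mu (pw P k) (pw Pd (S k))).
    { assert (E0 : Pd = mu P (mu Pd Pd)).
      { transitivity (mu (mu Pd P) Pd). exact HP2. rewrite HP1. nring. }
      induction k. rewrite pw_S, !pw_0. nring.
      rewrite (pw_Sl P k), (pw_S Pd (S k)).
      transitivity (mu (mu P (mu (pw P k) (pw Pd (S k)))) Pd). 2: nring.
      rewrite <- IHk. transitivity (mu P (mu Pd Pd)). exact E0. nring. }
    assert (Ed : forall k, mu (pw P (S k)) Q = mu (pw (mu P p) (S k)) Q).
    { intro k. rewrite pw_idem by auto.
      transitivity (mu (pw P (S k)) (mu p Q)). rewrite HpQ; reflexivity. nring. }
    apply zero_lim with (y := mu P p); auto.
    exists (nr Q * nr Pd), (nr Pd / cabs lam). split.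
    apply Rmult_le_pos; apply nr_ge0. split. apply Rdiv_le_0_compat. apply nr_ge0. auto.
    intros k Hk. destruct k as [|k]. lia.
    apply div_bound. auto.
    rewrite <- cabs_cpow, <- nrZ.
    assert (E : sc (cpow lam (S k)) (mu Q Pd) = mu (mu (pw (mu P p) (S k)) Q) (pw Pd (S (S k)))).
    { rewrite <- Ed, Ea, <- scMl.
      transitivity (sc (cpow lam (S k)) (mu Q (mu (pw P (S k)) (pw Pd (S (S k)))))).
      rewrite <- Eb. reflexivity. f_equal; nring. }
    rewrite E. eapply Rle_trans. apply nrM. eapply Rle_trans. apply Rmult_le_compat_l. apply nr_ge0. apply nr_pw.
    eapply Rle_trans. apply Rmult_le_compat_r. apply pow_le, nr_ge0. apply nrM.
    simpl (nr Pd ^ S (S k)). simpl (nr Pd ^ S k). pose proof (nr_ge0 N Pd).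
    pose proof (nr_ge0 N Q). pose proof (nr_ge0 N (pw (mu P p) (S k))).
    assert (0 <= nr Pd ^ k) by (apply pow_le; auto). nra. }
  repeat split; auto.
  - transitivity (ad (ad (mu Pd P) (mu Pd Q)) (ad (mu Qd P) (mu Qd Q))). nring.
    rewrite HPdQ, HQdP, HP1, HQ1.
    transitivity (ad (ad (mu P Pd) (mu P Qd)) (ad (mu Q Pd) (mu Q Qd))).
    2: nring. rewrite HPQd, HQPd. nring.
  - symmetry.
    transitivity (ad (ad (ad (mu (mu Pd P) Pd) (mu Pd (mu P Qd))) (ad (mu (mu Pd Q) Pd) (mu (mu Pd Q) Qd)))
                     (ad (ad (mu (mu Qd P) Pd) (mu (mu Qd P) Qd)) (ad (mu Qd (mu Q Pd)) (mu (mu Qd Q) Qd)))).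
    nring. rewrite HPQd, HPdQ, HQdP, HQPd, !mu0l, !mu0r, <- HP2, <- HQ2. nring.
  - assert (Z1 : mu (mu P Q) Qd = zr).
    { transitivity (mu P (mu Qd Q)). rewrite HQ1; nring.
      transitivity (mu (mu P Qd) Q). nring. rewrite HPQd; nring. }
    assert (Z2 : mu (mu Q P) Pd = zr).
    { transitivity (mu Q (mu Pd P)). rewrite HP1; nring.
      transitivity (mu (mu Q Pd) P). nring. rewrite HQPd; nring. }
    replace (ad (ad P Q) (op (mu (mu (ad P Q) (ad P Q)) (ad Pd Qd)))) with (ad (mu P p) (mu Q q)).
    2:{ transitivity (ad (ad P Q) (op (ad (ad (ad (mu (mu P P) Pd) (mu P (mu P Qd))) (ad (mu P (mu Q Pd)) (mu (mu P Q) Qd)))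
                     (ad (ad (mu (mu Q P) Pd) (mu Q (mu P Qd))) (ad (mu Q (mu Q Pd)) (mu (mu Q Q) Qd)))))).
        2: nring.
        rewrite Z1, Z2, HPQd, HQPd, !mu0r. unfold p, q, sb; nring. }
    apply qn_sum_lam with (lam := lam); auto.
    assert (HqP : mu q P = P).
    { transitivity (ad P (op (mu Q (mu Qd P)))). unfold q, sb; nring. rewrite HQdP. nring. }
    assert (Hxy1 : mu (mu P p) (mu Q q) = mu P Q).
    { transitivity (mu P (mu (mu p Q) q)). nring. rewrite HpQ, HQq.
      transitivity (mu (mu P q) Q). nring. rewrite HPq. reflexivity. }
    assert (Hyx1 : mu (mu Q q) (mu P p) = mu Q P).
    { transitivity (mu Q (mu (mu q P) p)). nring. rewrite HqP.
      transitivity (ad (mu Q P) (op (mu Q (mu P (mu P Pd))))). unfold p, sb; nring.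
      rewrite <- HP1.
      transitivity (ad (mu Q P) (op (mu (mu Q Pd) (mu P P)))).
      2:{ rewrite HQPd. nring. }
      f_equal. f_equal. transitivity (mu Q (mu (mu P Pd) P)). nring. rewrite <- HP1. nring. }
    rewrite Hxy1, Hyx1. exact HPQ.
Qed.

Lemma pw_right_zero (X Y : N) k : mu X Y = zr -> mu (pw X (S k)) Y = zr.
Proof. intro H. rewrite pw_S. transitivity (mu (pw X k) (mu X Y)). nring. rewrite H; nring. Qed.

Lemma pw_left_zero (X Y : N) k : mu Y X = zr -> mu Y (pw X (S k)) = zr.
Proof. intro H. rewrite pw_Sl. transitivity (mu (mu Y X) (pw X k)). nring. rewrite H; nring. Qed.

Lemma qn_eq (x y : N) : x = y -> qn x -> qn y.
Proof. intros ->; auto. Qed.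
End Gen.

Global Instance Aops (A : CBanachAlg) : @Ncring.Ring_ops (car A) bzero bone badd bmul bsub bopp eq := {}.
Global Instance Aring (A : CBanachAlg) : Ncring.Ring (Ro:=Aops A).
Proof. constructor; try (exact _); intros; cbv [Algebra_syntax.zero Algebra_syntax.one Algebra_syntax.addition Algebra_syntax.multiplication Algebra_syntax.subtraction Algebra_syntax.opposite Algebra_syntax.equality Ncring.zero_notation Ncring.one_notation Ncring.add_notation Ncring.mul_notation Ncring.sub_notation Ncring.opp_notation Ncring.eq_notation].
 - rewrite baddC; apply badd0.
 - apply baddC. - apply baddA. - apply bmul1l. - apply bmul1r. - apply bmulA.
 - apply bmulDl. - apply bmulDr. - reflexivity. - apply baddN.
Qed.

Definition NA (A : CBanachAlg) : NR :=
  {| T := car A; zr := bzero; on := bone; ad := badd; mu := bmul; op := bopp; sc := bscal; nr := bnorm;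
     adA := baddA A; adC := baddC A; ad0 := badd0 A; adN := baddN A; muA := bmulA A;
     mu1l := bmul1l A; mu1r := bmul1r A; muDl := bmulDl A; muDr := bmulDr A;
     sc1 := bscal1 A; scA := bscalA A; scDl := bscalDl A; scMl := bscalMl A; scMr := bscalMr A;
     nr_ge0 := bnorm_ge0 A; nr_eq0 := bnorm_eq0 A; nrD := bnormD A; nrZ := bnormZ A; nrM := bnormM A |}.

#[local] Arguments m11 {A}. #[local] Arguments m12 {A}. #[local] Arguments m21 {A}. #[local] Arguments m22 {A}.
Section M2inst.
Variable A : CBanachAlg.
Definition m2scal (a : cplx) (X : M2 A) :=
  mkM2 (bscal a (m11 X)) (bscal a (m12 X)) (bscal a (m21 X)) (bscal a (m22 X)).

Ltac m2t := intros; repeat match goal with X : M2 A |- _ => destruct X end;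
  unfold m2add, m2mul, m2opp, m2zero, m2one, m2scal; simpl; f_equal; nring.

Lemma m2addA (x y w : M2 A) : m2add x (m2add y w) = m2add (m2add x y) w. Proof. m2t. Qed.
Lemma m2addC (x y : M2 A) : m2add x y = m2add y x. Proof. m2t. Qed.
Lemma m2add0 (x : M2 A) : m2add x (m2zero A) = x. Proof. m2t. Qed.
Lemma m2addN (x : M2 A) : m2add x (m2opp A x) = m2zero A. Proof. m2t. Qed.
Lemma m2mulA (x y w : M2 A) : m2mul x (m2mul y w) = m2mul (m2mul x y) w. Proof. m2t. Qed.
Lemma m2mul1l (x : M2 A) : m2mul m2one x = x. Proof. m2t. Qed.
Lemma m2mul1r (x : M2 A) : m2mul x m2one = x. Proof. m2t. Qed.
Lemma m2mulDl (x y w : M2 A) : m2mul (m2add x y) w = m2add (m2mul x w) (m2mul y w). Proof. m2t. Qed.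
Lemma m2mulDr (x y w : M2 A) : m2mul x (m2add y w) = m2add (m2mul x y) (m2mul x w). Proof. m2t. Qed.

Lemma m2sc1 (x : M2 A) : m2scal Defs.c1 x = x.
Proof. destruct x; unfold m2scal; simpl; rewrite !bscal1; reflexivity. Qed.
Lemma m2scA a b (x : M2 A) : m2scal a (m2scal b x) = m2scal (cmul a b) x.
Proof. destruct x; unfold m2scal; simpl; rewrite !bscalA; reflexivity. Qed.
Lemma m2scDl a b (x : M2 A) : m2scal (cadd a b) x = m2add (m2scal a x) (m2scal b x).
Proof. destruct x; unfold m2scal, m2add; simpl; rewrite !bscalDl; reflexivity. Qed.
Lemma m2scMl a (x y : M2 A) : m2scal a (m2mul x y) = m2mul (m2scal a x) y.
Proof. destruct x, y; unfold m2scal, m2mul; simpl; rewrite !bscalDr, !bscalMl; reflexivity. Qed.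
Lemma m2scMr a (x y : M2 A) : m2scal a (m2mul x y) = m2mul x (m2scal a y).
Proof. destruct x, y; unfold m2scal, m2mul; simpl; rewrite !bscalDr, !bscalMr; reflexivity. Qed.

Lemma m2nr_ge0 (x : M2 A) : 0 <= m2norm A x.
Proof. unfold m2norm. pose proof (bnorm_ge0 A (m11 x)). pose proof (bnorm_ge0 A (m12 x)).
  pose proof (bnorm_ge0 A (m21 x)). pose proof (bnorm_ge0 A (m22 x)). lra. Qed.
Lemma m2nr_eq0 (x : M2 A) : m2norm A x = 0 -> x = m2zero A.
Proof. destruct x as [x1 x2 x3 x4]. unfold m2norm; simpl. intro H.
  pose proof (bnorm_ge0 A x1). pose proof (bnorm_ge0 A x2).
  pose proof (bnorm_ge0 A x3). pose proof (bnorm_ge0 A x4).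
  unfold m2zero. f_equal; apply bnorm_eq0; lra. Qed.
Lemma m2nrD (x y : M2 A) : m2norm A (m2add x y) <= m2norm A x + m2norm A y.
Proof. destruct x as [x1 x2 x3 x4], y as [y1 y2 y3 y4]; unfold m2norm, m2add; simpl.
  pose proof (bnormD A x1 y1). pose proof (bnormD A x2 y2).
  pose proof (bnormD A x3 y3). pose proof (bnormD A x4 y4). lra. Qed.
Lemma m2nrZ a (x : M2 A) : m2norm A (m2scal a x) = cabs a * m2norm A x.
Proof. destruct x; unfold m2norm, m2scal; simpl; rewrite !bnormZ; ring. Qed.
Lemma m2nrM (x y : M2 A) : m2norm A (m2mul x y) <= m2norm A x * m2norm A y.
Proof. destruct x as [x1 x2 x3 x4], y as [y1 y2 y3 y4]. unfold m2norm, m2mul; simpl.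
  assert (K : forall p1 p2 q1 q2 : A, bnorm (badd (bmul p1 q1) (bmul p2 q2)) <= bnorm p1 * bnorm q1 + bnorm p2 * bnorm q2).
  { intros. eapply Rle_trans. apply bnormD. pose proof (bnormM A p1 q1). pose proof (bnormM A p2 q2). lra. }
  pose proof (K x1 x2 y1 y3). pose proof (K x1 x2 y2 y4). pose proof (K x3 x4 y1 y3). pose proof (K x3 x4 y2 y4).
  pose proof (bnorm_ge0 A x1). pose proof (bnorm_ge0 A x2). pose proof (bnorm_ge0 A x3). pose proof (bnorm_ge0 A x4).
  pose proof (bnorm_ge0 A y1). pose proof (bnorm_ge0 A y2). pose proof (bnorm_ge0 A y3). pose proof (bnorm_ge0 A y4).
  set (a1 := bnorm x1) in *. set (a2 := bnorm x2) in *. set (a3 := bnorm x3) in *. set (a4 := bnorm x4) in *.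
  set (b1 := bnorm y1) in *. set (b2 := bnorm y2) in *. set (b3 := bnorm y3) in *. set (b4 := bnorm y4) in *.
  assert (0 <= a1*b2 + a1*b4 + a2*b1+a2*b3 + a3*b2+a3*b4+a4*b1+a4*b3) by
    (repeat apply Rplus_le_le_0_compat; apply Rmult_le_pos; auto).
  nra. Qed.

Definition NM : NR :=
  {| T := M2 A; zr := m2zero A; on := m2one; ad := m2add; mu := m2mul; op := m2opp A;
     sc := m2scal; nr := m2norm A;
     adA := m2addA; adC := m2addC; ad0 := m2add0; adN := m2addN; muA := m2mulA;
     mu1l := m2mul1l; mu1r := m2mul1r; muDl := m2mulDl; muDr := m2mulDr;
     sc1 := m2sc1; scA := m2scA; scDl := m2scDl; scMl := m2scMl; scMr := m2scMr;
     nr_ge0 := m2nr_ge0; nr_eq0 := m2nr_eq0; nrD := m2nrD; nrZ := m2nrZ; nrM := m2nrM |}.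

Lemma diag_pw (x y : A) n : pw NM (mkM2 x bzero bzero y) n = mkM2 (pw (NA A) x n) bzero bzero (pw (NA A) y n).
Proof.
  induction n. reflexivity.
  change (pw NM (mkM2 x bzero bzero y) (S n)) with (m2mul (pw NM (mkM2 x bzero bzero y) n) (mkM2 x bzero bzero y)).
  rewrite IHn. unfold m2mul, pw; simpl. f_equal; nring.
Qed.

Lemma diag_qn (x y : A) : qn (NA A) x -> qn (NA A) y -> qn NM (mkM2 x bzero bzero y).
Proof.
  intros Hx Hy. apply qn_crit. intros d Hd.
  destruct (qn_K (NA A) x Hx d Hd) as [Kx [HKx Bx]]. destruct (qn_K (NA A) y Hy d Hd) as [Ky [HKy By]].
  exists (Kx + Ky), 0%nat. intros n _. rewrite diag_pw.
  change (@nr NM (mkM2 (pw (NA A) x n) bzero bzero (pw (NA A) y n))) with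
    (bnorm (pw (NA A) x n) + bnorm (@bzero A) + bnorm (@bzero A) + bnorm (pw (NA A) y n)).
  pose proof (nr_zr (NA A)) as Z. simpl in Z. rewrite Z.
  specialize (Bx n). specialize (By n). simpl in Bx, By. lra.
Qed.

Lemma m2series_zero (f : nat -> M2 A) : (forall n, f n = m2zero A) -> m2series f (m2zero A).
Proof.
  intros H eps He. exists 0%nat. intros n _.
  assert (E : psum m2add (m2zero A) f n = m2zero A).
  { induction n; simpl. reflexivity. rewrite IHn, H. apply m2add0. }
  rewrite E. unfold m2sub. rewrite m2addN.
  pose proof (nr_zr NM) as Z. simpl in Z. rewrite Z. auto.
Qed.
End M2inst.

Lemma m2mul0l (A : CBanachAlg) (X : M2 A) : m2mul (m2zero A) X = m2zero A.
Proof. exact (mu0l (NM A) X). Qed.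
Lemma m2mul0r (A : CBanachAlg) (X : M2 A) : m2mul X (m2zero A) = m2zero A.
Proof. exact (mu0r (NM A) X). Qed.

Theorem theorem3p3 (A : CBanachAlg) (lam : cplx) (Hlam : lam <> c0)
  (a b c d : A) (ad dd bcd cbd : A)
  (Ha : gd a ad) (Hd : gd d dd)
  (Hbc : gd (bmul b c) bcd) (Hcb : gd (bmul c b) cbd)
  (H1 : bmul a b =
        bscal lam (bmul (bmul (bmul (spi a ad) b) d) (spi (bmul c b) cbd)))
  (H2 : bmul d c =
        bscal lam (bmul (bmul (bmul (spi d dd) c) a) (spi (bmul b c) bcd))) :
  let M := mkM2 a b c d in
  let P := mkM2 a bzero bzero d in
  let Q := mkM2 bzero b c bzero in
  let Pd := mkM2 ad bzero bzero dd in
  let Qd := mkM2 bzero (bmul b cbd) (bmul c bcd) bzero in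
  let Ppi := m2sub m2one (m2mul P Pd) in
  let Qpi := m2sub m2one (m2mul Q Qd) in
  let E := mkM2 (bmul (spi (bmul b c) bcd) ad) (bmul (bmul b cbd) (spi d dd))
                (bmul (bmul c bcd) (spi a ad)) (bmul (spi (bmul c b) cbd) dd) in
  exists (S1 S2 S3 S4 : M2 A) (T : nat -> M2 A),
    m2series (fun n => m2mul (m2mul (m2mul (m2pow Qd (n + 2)) P) (m2pow M n)) Ppi) S1 /\
    m2series (fun n => m2mul (m2mul (m2pow M n) Q) (m2pow Pd (n + 2))) S2 /\
    (forall n, m2series (fun k => m2mul (m2mul (m2mul (m2mul (m2pow Qd (k + 1)) P)
                                   (m2pow M (n + k))) Q) (m2pow Pd (n + 2))) (T n)) /\
    m2series T S3 /\
    m2series (fun n => m2mul (m2mul (m2mul (m2mul (m2pow Qd (n + 2)) P) (m2pow M n)) Q) Pd) S4 /\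
    m2gd M (m2sub (m2sub (m2add (m2add E S1) (m2mul Qpi S2)) S3) S4).
Proof.
  intros M P Q Pd Qd Ppi Qpi E.
  pose proof (cline (NA A) b c bcd Hbc) as Hcl.
  assert (Hcbd : cbd = bmul (bmul c (bmul bcd bcd)) b)
    by exact (gd_unique (NA A) (bmul c b) cbd _ Hcb Hcl).
  destruct Hbc as [Hbc1 [Hbc2 Hbc3]]. destruct Hcb as [Hcb1 [Hcb2 Hcb3]].
  destruct Ha as [Ha1 [Ha2 Ha3]]. destruct Hd as [Hd1 [Hd2 Hd3]].
  assert (Hwwu : bmul (bmul bcd bcd) (bmul b c) = bcd).
  { transitivity (bmul bcd (bmul bcd (bmul b c))). nring. rewrite Hbc1.
    transitivity (bmul (bmul bcd (bmul b c)) bcd). nring. symmetry; exact Hbc2. }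
  assert (Huww : bmul (bmul (bmul b c) bcd) bcd = bcd) by (rewrite <- Hbc1; symmetry; exact Hbc2).
  assert (F1 : bmul (bmul b cbd) c = bmul (bmul b c) bcd).
  { rewrite Hcbd. transitivity (bmul (bmul b c) (bmul (bmul bcd bcd) (bmul b c))). nring.
    rewrite Hwwu. reflexivity. }
  assert (F2 : bmul (bmul c bcd) b = bmul (bmul c b) cbd).
  { rewrite Hcbd. transitivity (bmul c (bmul (bmul (bmul (bmul b c) bcd) bcd) b)).
    rewrite Huww. nring. nring. }
  assert (gdP : gdN (NM A) P Pd).
  { split; [|split].
    - change (m2mul Pd P = m2mul P Pd). unfold P, Pd, m2mul; simpl.
      f_equal; [rewrite Ha1; reflexivity | nring | nring | rewrite Hd1; reflexivity].
    - change (Pd = m2mul (m2mul Pd P) Pd). unfold P, Pd, m2mul; simpl. f_equal.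
      + transitivity (bmul (bmul ad a) ad). exact Ha2. nring.
      + nring. + nring.
      + transitivity (bmul (bmul dd d) dd). exact Hd2. nring.
    - change (qn (NM A) (m2add P (m2opp A (m2mul (m2mul P P) Pd)))).
      apply (qn_eq (NM A)) with (x := @mkM2 A (badd a (bopp (bmul (bmul a a) ad))) bzero bzero
                               (badd d (bopp (bmul (bmul d d) dd)))).
      unfold P, Pd, m2mul, m2add, m2opp; simpl. f_equal; nring.
      apply diag_qn; assumption. }
  assert (gdQ : gdN (NM A) Q Qd).
  { split; [|split].
    - change (m2mul Qd Q = m2mul Q Qd). unfold Q, Qd, m2mul; simpl. f_equal.
      + transitivity (bmul (bmul b cbd) c). nring. rewrite F1. nring.
      + nring. + nring.
      + transitivity (bmul (bmul c bcd) b). nring. rewrite F2. nring.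
    - change (Qd = m2mul (m2mul Qd Q) Qd). unfold Q, Qd, m2mul; simpl. f_equal.
      + nring.
      + transitivity (bmul b (bmul (bmul cbd (bmul c b)) cbd)). rewrite <- Hcb2; reflexivity. nring.
      + transitivity (bmul c (bmul (bmul bcd (bmul b c)) bcd)). rewrite <- Hbc2; reflexivity. nring.
      + nring.
    - change (qn (NM A) (m2add Q (m2opp A (m2mul (m2mul Q Q) Qd)))).
      apply (qn_sq (NM A)).
      apply (qn_eq (NM A)) with (x := @mkM2 A (badd (bmul b c) (bopp (bmul (bmul (bmul b c) (bmul b c)) bcd))) bzero bzero
                               (badd (bmul c b) (bopp (bmul (bmul (bmul c b) (bmul c b)) cbd)))).
      2: apply diag_qn; assumption.
      simpl. unfold Q, Qd, m2mul, m2add, m2opp; simpl. f_equal.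
      + symmetry.
        transitivity (badd (bmul b c) (bopp (badd (badd (bmul (bmul b c) (bmul (bmul b c) bcd))
                        (bmul (bmul b c) (bmul (bmul b cbd) c)))
                        (bopp (bmul (bmul (bmul b c) (bmul (bmul b cbd) c)) (bmul (bmul b c) bcd)))))).
        nring. rewrite F1.
        assert (G : bmul (bmul (bmul b c) (bmul (bmul b c) bcd)) (bmul (bmul b c) bcd)
                    = bmul (bmul (bmul b c) (bmul b c)) bcd).
        { transitivity (bmul (bmul (bmul b c) (bmul b c)) (bmul (bmul bcd (bmul b c)) bcd)). nring.
          rewrite <- Hbc2. reflexivity. }
        rewrite G. nring.
      + nring. + nring.
      + symmetry.
        transitivity (badd (bmul c b) (bopp (badd (badd (bmul (bmul c b) (bmul (bmul c b) cbd))
                        (bmul (bmul c b) (bmul (bmul c bcd) b)))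
                        (bopp (bmul (bmul (bmul c b) (bmul (bmul c bcd) b)) (bmul (bmul c b) cbd)))))).
        nring. rewrite F2.
        assert (G : bmul (bmul (bmul c b) (bmul (bmul c b) cbd)) (bmul (bmul c b) cbd)
                    = bmul (bmul (bmul c b) (bmul c b)) cbd).
        { transitivity (bmul (bmul (bmul c b) (bmul c b)) (bmul (bmul cbd (bmul c b)) cbd)). nring.
          rewrite <- Hcb2. reflexivity. }
        rewrite G. nring. }
  assert (HH : m2mul P Q = m2scal A lam (m2mul (m2mul (m2mul (m2add m2one (m2opp A (m2mul P Pd))) Q) P)
                                             (m2add m2one (m2opp A (m2mul Q Qd))))).
  { unfold P, Q, Pd, Qd, m2mul, m2add, m2opp, m2one, m2scal; simpl. f_equal.
    - transitivity (@bzero A). nring. transitivity (bscal lam (@bzero A)).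
      symmetry; exact (sc_zr (NA A) lam). f_equal; nring.
    - transitivity (bmul a b). nring. rewrite H1. f_equal. unfold spi, bsub. nring.
    - transitivity (bmul d c). nring. rewrite H2. f_equal. unfold spi, bsub. nring.
    - transitivity (@bzero A). nring. transitivity (bscal lam (@bzero A)).
      symmetry; exact (sc_zr (NA A) lam). f_equal; nring. }
  destruct (core (NM A) P Q Pd Qd lam Hlam gdP gdQ HH) as [HPdQ [HPQd [HQdP [HQPd Hgd]]]].
  assert (e1 : bmul (bmul b cbd) d = bzero).
  { transitivity (m12 (m2mul Qd P)). unfold Qd, P, m2mul; simpl; nring.
    change (m2mul Qd P) with (@mu (NM A) Qd P). rewrite HQdP. reflexivity. }
  assert (e2 : bmul (bmul c bcd) a = bzero).
  { transitivity (m21 (m2mul Qd P)). unfold Qd, P, m2mul; simpl; nring.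
    change (m2mul Qd P) with (@mu (NM A) Qd P). rewrite HQdP. reflexivity. }
  assert (e3 : bmul c ad = bzero).
  { transitivity (m21 (m2mul Q Pd)). unfold Q, Pd, m2mul; simpl; nring.
    change (m2mul Q Pd) with (@mu (NM A) Q Pd). rewrite HQPd. reflexivity. }
  assert (e4 : bmul b dd = bzero).
  { transitivity (m12 (m2mul Q Pd)). unfold Q, Pd, m2mul; simpl; nring.
    change (m2mul Q Pd) with (@mu (NM A) Q Pd). rewrite HQPd. reflexivity. }
  assert (ZQdP : forall k, m2mul (m2pow Qd (S k)) P = m2zero A)
    by (intro k; exact (pw_right_zero (NM A) Qd P k HQdP)).
  assert (ZQPd : forall k, m2mul Q (m2pow Pd (S k)) = m2zero A)
    by (intro k; exact (pw_left_zero (NM A) Pd Q k HQPd)).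
  exists (m2zero A), (m2zero A), (m2zero A), (m2zero A), (fun _ => m2zero A).
  split; [|split; [|split; [|split; [|split]]]].
  - apply m2series_zero. intro n. replace (n + 2)%nat with (S (n + 1)) by lia.
    rewrite ZQdP, !m2mul0l. reflexivity.
  - apply m2series_zero. intro n. replace (n + 2)%nat with (S (n + 1)) by lia.
    rewrite <- m2mulA, ZQPd, m2mul0r. reflexivity.
  - intro n. apply m2series_zero. intro k. replace (k + 1)%nat with (S k) by lia.
    rewrite ZQdP, !m2mul0l. reflexivity.
  - apply m2series_zero. intro n. reflexivity.
  - apply m2series_zero. intro n. replace (n + 2)%nat with (S (n + 1)) by lia.
    rewrite ZQdP, !m2mul0l. reflexivity.
  - assert (EM : M = m2add P Q).
    { unfold M, P, Q, m2add; simpl. f_equal; nring. }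
    assert (EX : m2sub (m2sub (m2add (m2add E (m2zero A)) (m2mul Qpi (m2zero A))) (m2zero A)) (m2zero A)
                 = m2add Pd Qd).
    { unfold E, Pd, Qd, Qpi, m2sub, m2add, m2mul, m2opp, m2zero; simpl. f_equal.
      - transitivity (bmul (spi (bmul b c) bcd) ad). nring. unfold spi, bsub.
        rewrite <- Hbc1.
        transitivity (badd ad (bopp (bmul (bmul bcd b) (bmul c ad)))). nring. rewrite e3. nring.
      - transitivity (bmul (bmul b cbd) (spi d dd)). nring. unfold spi, bsub.
        transitivity (badd (bmul b cbd) (bopp (bmul (bmul (bmul b cbd) d) dd))). nring. rewrite e1. nring.
      - transitivity (bmul (bmul c bcd) (spi a ad)). nring. unfold spi, bsub.
        transitivity (badd (bmul c bcd) (bopp (bmul (bmul (bmul c bcd) a) ad))). nring. rewrite e2. nring.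
      - transitivity (bmul (spi (bmul c b) cbd) dd). nring. unfold spi, bsub.
        rewrite <- Hcb1.
        transitivity (badd dd (bopp (bmul (bmul cbd c) (bmul b dd)))). nring. rewrite e4. nring. }
    rewrite EX, EM. exact Hgd.
Qed.
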